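(* Let $\mathbb{M}^2$ be a normed plane and let $S$ be a finite set of points of $\mathbb{M}^2$ with all pairwise distances distinct. If $e$ is an edge of $\mathtt{MXST}(S)$, then at least one endpoint of $e$ lies on $\partial\mathrm{conv}(S)$.
   Context: $\mathbb{M}^2$ is $\mathbb{R}^2$ with an arbitrary norm $\|\cdot\|$. $\mathtt{MXST}(S)$ is the (unique) maximum spanning tree of the complete graph on $S$ in which the edge $\{p,q\}$ has weight $\|p-q\|$. $\partial\mathrm{conv}(S)$ is the boundary of the convex hull of $S$. *)

(* Defs.v *)
From HB Require Import structures.
From mathcomp Require Import all_boot all_order all_algebra.
From mathcomp Require Import reals.
Set Implicit Arguments. Unset Strict Implicit. Unset Printing Implicit Defensive.
Import Order.TTheory GRing.Theory Num.Theory.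
Local Open Scope ring_scope.

Section Defs.
Variable R : realType.
Notation pt := 'rV[R]_2.

Definition is_norm (N : pt -> R) : Prop :=
  [/\ (forall v, N v = 0 -> v = 0),
      (forall (a : R) v, N (a *: v) = `|a| * N v) &
      (forall u v, N (u + v) <= N u + N v)].

Variable n : nat.
Variable p : 'I_n -> pt.   (* S = { p i | i < n } *)
Variable N : pt -> R.

Definition distinct_distances : Prop :=
  forall i j k l : 'I_n, i != j -> k != l ->
    ~ ((i == k) && (j == l) || (i == l) && (j == k)) ->
    N (p i - p j) != N (p k - p l).

Definition in_conv (x : pt) : Prop :=
  exists l : 'I_n -> R, [/\ (forall i, 0 <= l i), \sum_i l i = 1 &
                           x = \sum_i l i *: p i].

Definition in_interior (A : pt -> Prop) (x : pt) : Prop :=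
  exists2 eps : R, 0 < eps & forall y, N (y - x) < eps -> A y.
Definition in_closure (A : pt -> Prop) (x : pt) : Prop :=
  forall eps : R, 0 < eps -> exists2 y, A y & N (y - x) < eps.
Definition on_boundary (A : pt -> Prop) (x : pt) : Prop :=
  in_closure A x /\ ~ in_interior A x.

(* Subgraphs of the complete graph on S: edge sets of ordered pairs (i, j)
   with i < j, representing the unordered edge {p i, p j}. *)
Definition adj (T : {set 'I_n * 'I_n}) : rel 'I_n :=
  fun i j => ((i, j) \in T) || ((j, i) \in T).

Definition acyclic (T : {set 'I_n * 'I_n}) : Prop :=
  ~ exists c : seq 'I_n, [&& uniq c, (2 < size c)%N & cycle (adj T) c].

Definition spanning_tree (T : {set 'I_n * 'I_n}) : Prop :=
  [/\ (forall e, e \in T -> (e.1 < e.2)%N),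
      (forall x y, connect (adj T) x y) & acyclic T].

Definition weight (T : {set 'I_n * 'I_n}) : R :=
  \sum_(e in T) N (p e.1 - p e.2).

Definition max_spanning_tree (T : {set 'I_n * 'I_n}) : Prop :=
  spanning_tree T /\ forall T', spanning_tree T' -> weight T' <= weight T.

End Defs.

(* Main.v *)
Require Import Defs.
From HB Require Import structures.
From mathcomp Require Import all_boot all_order all_algebra.
From mathcomp Require Import reals.
From mathcomp Require Import ring lra.
From Stdlib Require Classical_Prop.
Import Order.TTheory GRing.Theory Num.Theory.
Local Open Scope ring_scope.

Lemma adj_sym n (S : {set 'I_n * 'I_n}) : symmetric (adj S).
Proof. by move=> i j; rewrite /adj orbC. Qed.
Arguments adj_sym {n}.

Lemma path_src (T : eqType) (r s : rel T) (P : pred T) u p v :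
  (forall a b, P a -> s a b -> r a b) -> all P (u :: p) ->
  path s u (rcons p v) -> path r u (rcons p v).
Proof.
move=> H; elim: p u => [|w p IH] u /= /andP[Pu Pp].
  by rewrite !andbT; apply: H.
case/andP: Pp => Pw Pp /andP[suw pth].
by rewrite (H _ _ Pu suw) /= IH //= Pw.
Qed.

Lemma cycle_break (T : finType) (r s : rel T) (x y : T) (c : seq T) :
  symmetric r ->
  (forall u v, s u v -> r u v \/ (u = x /\ v = y) \/ (u = y /\ v = x)) ->
  uniq c -> (2 < size c)%N -> cycle s c -> cycle r c \/ connect r x y.
Proof.
move=> rsym sr uc sc cs.
case: (boolP (cycle r c)) => [|ncr]; first by left.
right.
have : ~~ all (fun z => r z (next c z)) c.
  apply: contra ncr => /allP H; exact: cycle_from_next.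
case/allPn => z zc nz.
have szn := next_cycle cs zc.
have zw : (z = x /\ next c z = y) \/ (z = y /\ next c z = x).
  by case: (sr _ _ szn) => // H; rewrite H in nz.
case: (rot_to zc) => i q Hrot.
have Enext : next c z = next (z :: q) z by rewrite -Hrot next_rot.
have uq : uniq (z :: q) by rewrite -Hrot rot_uniq.
have sq : size (z :: q) = size c by rewrite -Hrot size_rot.
have cq : cycle s (z :: q) by rewrite -Hrot rot_cycle.
clear Hrot; move: Enext uq sq cq; case: q => [|w [|h q']]; first by move=> _ _ sq; rewrite -sq in sc.
  by move=> _ _ sq; rewrite -sq in sc.
move=> Enext uq _ cq.
have Ew : next c z = w by rewrite Enext /= eqxx.
rewrite Ew in zw.
have pairP : forall u v, s u v -> r u v \/ ((u == z) || (u == w)) && ((v == z) || (v == w)).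
  move=> u v /sr [|[[-> ->]|[-> ->]]]; first by left.
    by right; case: zw => [[-> ->]|[-> ->]]; rewrite !eqxx ?orbT.
  by right; case: zw => [[-> ->]|[-> ->]]; rewrite !eqxx ?orbT.
move: uq; rewrite /= !inE !negb_or => /and4P [/and3P[zw' zh zq'] /andP[wh wq'] hq' _].
move: cq; rewrite /= => /and3P[_ swh pth].
have rwh : r w h.
  case: (pairP _ _ swh) => // /andP[_].
  by rewrite eq_sym (negbTE zh) eq_sym (negbTE wh).
have pr : path r h (rcons q' z).
  apply: (@path_src _ r s [pred t | (t != z) && (t != w)]) pth.
    move=> u v /andP[uz uw] suv; case: (pairP _ _ suv) => // /andP[].
    by rewrite (negbTE uz) (negbTE uw).
  rewrite /= eq_sym zh eq_sym wh /=; apply/allP => t tq /=.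
  apply/andP; split; apply/eqP => Et; subst t; [by rewrite tq in zq'|by rewrite tq in wq'].
have cwz : connect r w z.
  apply/connectP; exists (h :: rcons q' z); first by rewrite /= rwh.
  by rewrite /= last_rcons.
case: zw => [[Ez Ew']|[Ez Ew']]; subst.
  by rewrite (sym_connect_sym rsym).
done.
Qed.
Section Tree.
Variable n : nat.
Variables (T : {set 'I_n * 'I_n}) (a b : 'I_n).
Hypothesis Ht : spanning_tree T.
Hypothesis Hab : (a, b) \in T.

Local Notation T0 := (T :\ (a, b)).
Local Notation r := (adj T0).

Lemma ab_lt : (a < b)%N.
Proof. by case: Ht => H _ _; exact: (H _ Hab). Qed.

Lemma conn_r_sym : connect_sym r.
Proof. apply: sym_connect_sym; exact: adj_sym. Qed.

Lemma subT0 : subrel r (adj T).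
Proof.
move=> u v; rewrite /adj !in_setD1 => /orP[/andP[_ ->]|/andP[_ ->]] //.
by rewrite orbT.
Qed.

Lemma adjT_cases u v : adj T u v -> r u v \/ (u = a /\ v = b) \/ (u = b /\ v = a).
Proof.
rewrite /adj !in_setD1.
case: (boolP ((u, v) == (a, b))) => [/eqP [-> ->]|huv]; first by right; left.
case: (boolP ((v, u) == (a, b))) => [/eqP [-> ->]|hvu]; first by right; right.
by rewrite /= => H; left.
Qed.

Lemma comp_ab z : connect r a z || connect r b z.
Proof.
case: Ht => _ Hc _.
have cl : closed (adj T) [pred t | connect r a t || connect r b t].
  move=> u v /adjT_cases [H|[[-> ->]|[-> ->]]]; last 2 first.
  - by rewrite !inE /= !connect0 ?orbT.
  - by rewrite !inE /= !connect0 ?orbT.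
  rewrite !inE /=; apply/idP/idP => /orP[H1|H1]; apply/orP.
  - by left; apply: connect_trans H1 (connect1 H).
  - by right; apply: connect_trans H1 (connect1 H).
  - by left; apply: connect_trans H1 (connect1 _); rewrite adj_sym.
  - by right; apply: connect_trans H1 (connect1 _); rewrite adj_sym.
have := closed_connect cl (Hc a z).
by rewrite !inE connect0 /= => <-.
Qed.

Lemma b_notA : ~~ connect r a b.
Proof.
apply/negP => /connectP [p pth lst].
move: lst; case/shortenP: pth => p' pth' uq _ lst.
case: Ht => Hord _ Hac; apply: Hac; exists (a :: p').
have ab := ab_lt.
case: p' pth' uq lst => [|c [|d p'']] pth' uq lst.
- by move: ab; rewrite /= lst ltnn.
- move: lst => /= lst; subst.
  move: pth'; rewrite /= andbT /adj !in_setD1 eqxx /=.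
  move=> /andP[_ H]; have := Hord _ H; rewrite /= => H2.
  by move: (ltn_trans ab H2); rewrite ltnn.
- rewrite uq /=.
  change (is_true (path (adj T) a (rcons [:: c, d & p''] a))).
  rewrite rcons_path (sub_path subT0 pth') -lst /adj Hab orbT.
  done.
Qed.

Variables x y : 'I_n.
Hypothesis Hx : connect r a x.
Hypothesis Hy : ~~ connect r a y.

Local Notation f := (if (x < y)%N then (x, y) else (y, x)).
Local Notation T' := (f |: T0).

Lemma y_b : connect r b y.
Proof. by have := comp_ab y; rewrite (negbTE Hy). Qed.

Lemma xy_neq : x != y.
Proof. by apply/eqP => E; move: Hy; rewrite -E Hx. Qed.

Lemma adjT'_f : adj T' x y.
Proof. by rewrite /adj; case: ifP => _; rewrite !in_setU1 eqxx ?orbT. Qed.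

Lemma sub_rT' : subrel r (adj T').
Proof.
by move=> u v; rewrite /adj !in_setU1 => /orP[->|->]; rewrite ?orbT.
Qed.

Lemma conn_rT' u v : connect r u v -> connect (adj T') u v.
Proof. move=> H; apply: (connect_sub _ H) => u' v' h; apply: connect1; exact: sub_rT'. Qed.

Lemma f_notin : f \notin T0.
Proof.
apply/negP => H; have rxy : r x y.
  by move: H; rewrite /adj; case: ifP => _ ->; rewrite ?orbT.
by move: Hy; rewrite (connect_trans Hx (connect1 rxy)).
Qed.

Lemma T'_tree : spanning_tree T'.
Proof.
case: Ht => Hord Hc Hac.
split.
- move=> e'; rewrite in_setU1 => /orP[/eqP->|].
    case: ifP => //= /negbT; rewrite -leqNgt leq_eqVlt => /orP[/eqP E|//].
    have E' : y = x by apply: val_inj.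
    by move: xy_neq; rewrite E' eqxx.
  by rewrite in_setD1 => /andP[_ H]; exact: Hord.
- have key : connect (adj T') a b.
    apply: (connect_trans (y := x)).
      exact: conn_rT' Hx.
    apply: (connect_trans (connect1 adjT'_f)).
    have yb := y_b; rewrite conn_r_sym in yb.
    exact: conn_rT' yb.
  move=> u v; apply: (connect_sub _ (Hc u v)).
  move=> u' v' /adjT_cases [H|[[-> ->]|[-> ->]]].
  + by apply: connect1; apply: sub_rT'.
  + exact: key.
  + by rewrite (sym_connect_sym (adj_sym T')).
- move=> [c /and3P [uc sc cc]].
  have sr : forall u v, adj T' u v -> r u v \/ (u = x /\ v = y) \/ (u = y /\ v = x).
    move=> u v; rewrite /adj !in_setU1.
    case: ifP => _; case/orP => [/orP[/eqP [-> ->]|H]|/orP[/eqP [-> ->]|H]];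
      by [right; left|right; right|left; rewrite /adj H ?orbT].
  case: (@cycle_break _ _ _ x y c (adj_sym T0) sr uc sc cc) => [H|H].
    by apply: Hac; exists c; rewrite uc sc (sub_cycle subT0 H).
  by move: Hy; rewrite (connect_trans Hx H).
Qed.

Variables (R : realType) (p : 'I_n -> 'rV[R]_2) (N : 'rV[R]_2 -> R).
Hypothesis Nsym : forall v, N (- v) = N v.

Lemma weight_T' : weight p N T' = weight p N T - N (p a - p b) + N (p x - p y).
Proof.
rewrite /weight (big_setU1 _ f_notin) (big_setD1 _ Hab) /=.
case: ifP => _ /=; last rewrite -opprB Nsym; lra.
Qed.

Lemma exchange : max_spanning_tree p N T -> N (p x - p y) <= N (p a - p b).
Proof. case=> _ Hmax; have := Hmax _ T'_tree; rewrite weight_T'; lra. Qed.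

End Tree.
Lemma ord2P (j : 'I_2) : j = ord0 \/ j = ord_max.
Proof. by case: j => [[|[|k]] Hk]; [left|right|]; try apply: val_inj. Qed.

Section NormFacts.
Variables (R : realType) (N : 'rV[R]_2 -> R).
Hypothesis HN : is_norm N.

Lemma N0 : N 0 = 0.
Proof. by case: HN => _ Nh _; rewrite -(scale0r 0) Nh normr0 mul0r. Qed.

Lemma Nsym v : N (- v) = N v.
Proof. by case: HN => _ Nh _; rewrite -scaleN1r Nh normrN1 mul1r. Qed.

Lemma Nge0 v : 0 <= N v.
Proof.
case: HN => _ _ Nt; have := Nt v (- v); rewrite subrr N0 Nsym; lra.
Qed.

Lemma support (u : 'rV[R]_2) : u != 0 ->
  exists phi : 'rV[R]_2 -> R,
    [/\ (forall v w, phi (v + w) = phi v + phi w),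
        (forall (c : R) v, phi (c *: v) = c * phi v),
        phi u = N u & forall v, phi v <= N v].
Proof.
move=> unz; case: HN => N0' Nh Nt.
pose u0 := u ord0 ord0; pose u1 := u ord0 ord_max.
have qne : u0 ^+ 2 + u1 ^+ 2 != 0.
  apply: contra unz; rewrite paddr_eq0 ?sqr_ge0 // !sqrf_eq0 => /andP[/eqP h0 /eqP h1].
  by apply/eqP/rowP => j; rewrite mxE; case: (ord2P j) => ->; rewrite ?h0 ?h1 ?ord1.
pose w : 'rV[R]_2 := \row_(j < 2) (if j == ord0 then - u1 else u0).
pose al (v : 'rV[R]_2) := (v ord0 ord_max * u0 - v ord0 ord0 * u1) / (u0 ^+ 2 + u1 ^+ 2).
pose be (v : 'rV[R]_2) := (v ord0 ord0 * u0 + v ord0 ord_max * u1) / (u0 ^+ 2 + u1 ^+ 2).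
have dec v : v = al v *: w + be v *: u.
  apply/rowP => j; rewrite !mxE; case: (ord2P j) => ->; rewrite /al /be /u0 /u1 /=.
    field; exact: qne.
  field; exact: qne.
have alD v v' : al (v + v') = al v + al v' by rewrite /al !mxE; field.
have beD v v' : be (v + v') = be v + be v' by rewrite /be !mxE; field.
have alZ (c : R) v : al (c *: v) = c * al v by rewrite /al !mxE; field.
have beZ (c : R) v : be (c *: v) = c * be v by rewrite /be !mxE; field.
have alu : al u = 0 by rewrite /al /u0 /u1; field.
have beu : be u = 1 by rewrite /be /u0 /u1 -!expr2 divff.
pose E := fun r : R => exists s : R, r = - N (w + s *: u) - s * N u.
have key s s' : - N (w + s *: u) - s * N u <= N (w + s' *: u) - s' * N u.
  have h1 : (s' - s) * N u <= N (w + s' *: u) + N (w + s *: u).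
    have -> : (s' - s) * N u = `|s' - s| * N u - (`|s' - s| - (s' - s)) * N u by ring.
    rewrite -Nh.
    have -> : (s' - s) *: u = (w + s' *: u) + - (w + s *: u).
      by apply/rowP => j; rewrite !mxE; ring.
    have := Nt (w + s' *: u) (- (w + s *: u)); rewrite Nsym.
    have : 0 <= (`|s' - s| - (s' - s)) * N u.
      by apply: mulr_ge0; [rewrite subr_ge0 ler_norm|exact: Nge0].
    lra.
  lra.
have hs : classical_sets.has_sup E.
  split; first by exists (- N (w + 0 *: u) - 0 * N u); exists 0.
  exists (N (w + 0 *: u) - 0 * N u) => r [s ->]; exact: key.
pose t := sup E.
pose phi v := al v * t + be v * N u.
exists phi; split.
- by move=> v v'; rewrite /phi alD beD; ring.
- by move=> c v; rewrite /phi alZ beZ; ring.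
- by rewrite /phi alu beu; ring.
move=> v; rewrite /phi.
have Nu0 := Nge0 u.
set A := al v; set B := be v.
have Ev : v = A *: w + B *: u by exact: dec.
case: (ltrgtP A 0) => HA.
- pose s := B / A.
  have H : - N (w + s *: u) - s * N u <= t.
    by have := sup_upper_bound hs; move/classical_sets.ubP; apply; exists s.
  have Ev' : v = A *: (w + s *: u) by rewrite Ev scalerDr scalerA /s mulrC divfK // lt_eqF.
  have Nv : N v = - A * N (w + s *: u) by rewrite {1}Ev' Nh ltr0_norm.
  have As : A * s = B by rewrite /s mulrC divfK // lt_eqF.
  have P : 0 <= (- A) * (t + N (w + s *: u) + s * N u).
    by apply: mulr_ge0; lra.
  rewrite Nv; nra.
- pose s := B / A.
  have H : t <= N (w + s *: u) - s * N u.
    apply: ge_sup; first by case: hs.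
    by move=> r [s' ->]; exact: key.
  have Ev' : v = A *: (w + s *: u) by rewrite Ev scalerDr scalerA /s mulrC divfK // gt_eqF.
  have Nv : N v = A * N (w + s *: u) by rewrite {1}Ev' Nh gtr0_norm.
  have As : A * s = B by rewrite /s mulrC divfK // gt_eqF.
  have P : 0 <= A * (N (w + s *: u) - s * N u - t).
    by apply: mulr_ge0; lra.
  rewrite Nv; nra.
- have Nv : N v = `|B| * N u by rewrite {1}Ev HA scale0r add0r Nh.
  rewrite Nv HA mul0r add0r; apply: ler_wpM2r => //; exact: ler_norm.
Qed.

End NormFacts.

Arguments ab_lt {n T a b}.
Arguments b_notA {n T a b}.
Arguments exchange {n T a b} Ht Hab {x y} Hx Hy {R p N} Nsym _.
Arguments N0 {R N}.
Arguments Nsym {R N}.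
Arguments Nge0 {R N}.
Arguments support {R N}.

Lemma conv_max (R : realType) n (p : 'I_n -> 'rV[R]_2) (phi : 'rV[R]_2 -> R) :
  (forall v w, phi (v + w) = phi v + phi w) ->
  (forall (c : R) v, phi (c *: v) = c * phi v) ->
  forall y, in_conv p y -> exists c, phi y <= phi (p c).
Proof.
move=> phiD phiZ y [l [l0 l1 ->]].
have phi0 : phi 0 = 0 by rewrite -(scale0r 0) phiZ mul0r.
have phiS : phi (\sum_i l i *: p i) = \sum_i l i * phi (p i).
  apply: (big_ind2 (fun x y => phi x = y)); first exact: phi0.
    by move=> x1 x2 y1 y2 <- <-; rewrite phiD.
  by move=> i _; rewrite phiZ.
set Y := phi (\sum_i l i *: p i).
case: (boolP [exists c, Y <= phi (p c)]) => [/existsP [c Hc]|]; first by exists c.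
rewrite negb_exists => /forallP H; exfalso.
have E : \sum_i l i * (Y - phi (p i)) = 0.
  under eq_bigr => i _ do rewrite mulrBr.
  by rewrite sumrB -mulr_suml l1 mul1r -phiS subrr.
have H2 : forall i, l i * (Y - phi (p i)) = 0.
  move=> i; apply: (psumr_eq0P _ E) => // j _; apply: mulr_ge0 => //.
  by rewrite subr_ge0 ltW // ltNge H.
have : forall i, l i = 0.
  move=> i; have /eqP := H2 i; rewrite mulf_eq0 => /orP[/eqP //|].
  by rewrite subr_eq0 => /eqP Ei; move: (H i); rewrite -Ei lexx.
move=> l0'; move: l1; rewrite big1 // => /eqP; rewrite eq_sym oner_eq0; done.
Qed.

Arguments conv_max {R n p phi}.

Lemma in_conv_pt (R : realType) n (p : 'I_n -> 'rV[R]_2) i : in_conv p (p i).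
Proof.
exists (fun j => (j == i)%:R); split.
- by move=> j; rewrite ler0n.
- by rewrite (bigD1 i) //= eqxx big1 ?addr0 // => j /negbTE ->.
- by rewrite (bigD1 i) //= eqxx scale1r big1 ?addr0 // => j /negbTE ->; rewrite scale0r.
Qed.

Theorem lemma3p5 (R : realType) (N : 'rV[R]_2 -> R) (n : nat)
  (p : 'I_n -> 'rV[R]_2) :
  is_norm N -> injective p -> distinct_distances p N ->
  forall T : {set 'I_n * 'I_n}, max_spanning_tree p N T ->
  forall e, e \in T ->
    on_boundary N (in_conv p) (p e.1) \/ on_boundary N (in_conv p) (p e.2).
Proof.
move=> HN pinj _ T Hmax [a b] Hab /=.
have Ht : spanning_tree T by case: Hmax.
have clos : forall i, in_closure N (in_conv p) (p i).
  move=> i eps eps0; exists (p i); first exact: in_conv_pt.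
  by rewrite subrr (N0 HN).
case: (Classical_Prop.classic (in_interior N (in_conv p) (p a))) => Ia; last by left.
case: (Classical_Prop.classic (in_interior N (in_conv p) (p b))) => Ib; last by right.
exfalso.
have ab := ab_lt Ht Hab.
have Ns := Nsym HN.
case: (HN) => N0' Nh Nt.
pose u := p b - p a.
have unz : u != 0.
  rewrite subr_eq0; apply/negP => /eqP /pinj E.
  by move: ab; rewrite E ltnn.
have d0 : 0 < N u.
  rewrite lt0r (Nge0 HN) andbT; apply: contra unz => /eqP /N0' ->; done.
have [phi [phiD phiZ phiu phiN]] := support HN _ unz.
have phiB v w : phi (v - w) = phi v - phi w.
  by rewrite phiD -scaleN1r phiZ mulN1r.
case: Ib => eps e0 Hb.
pose s := eps / (N u + N u).
have s0 : 0 < s by rewrite /s divr_gt0 // addr_gt0.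
have Nsu : N (s *: u) < eps.
  rewrite Nh gtr0_norm // /s.
  have -> : eps / (N u + N u) * N u = eps / 2.
    by field; rewrite gt_eqF // addr_gt0.
  lra.
have hy : N (p b + s *: u - p b) < eps by rewrite addrAC subrr add0r.
have [c Hc] := conv_max phiD phiZ _ (Hb _ hy).
have Hc' : phi (p b) < phi (p c).
  apply: lt_le_trans Hc; rewrite phiD phiZ phiu; rewrite ltrDl; exact: mulr_gt0.
case: Ia => eps' e0' Ha.
pose s' := eps' / (N u + N u).
have s0' : 0 < s' by rewrite /s' divr_gt0 // addr_gt0.
have Nsu' : N ((- s') *: u) < eps'.
  rewrite Nh normrN gtr0_norm // /s'.
  have -> : eps' / (N u + N u) * N u = eps' / 2.
    by field; rewrite gt_eqF // addr_gt0.
  lra.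
have mphiD : forall v w, - phi (v + w) = - phi v + - phi w by move=> v w; rewrite phiD opprD.
have mphiZ : forall (k : R) v, - phi (k *: v) = k * - phi v by move=> k v; rewrite phiZ mulrN.
have hy' : N (p a + (- s') *: u - p a) < eps' by rewrite addrAC subrr add0r.
have [c' Hc'0] := conv_max mphiD mphiZ _ (Ha _ hy').
have Hc'' : phi (p c') < phi (p a).
  move: Hc'0; rewrite phiD phiZ phiu => H.
  have : 0 < s' * N u by exact: mulr_gt0.
  lra.
have du : phi (p b) - phi (p a) = N u by rewrite -phiB.
have Nab : N (p a - p b) = N u by rewrite -Ns opprB.
have K1 : N u < N (p c - p a).
  apply: lt_le_trans (phiN _); rewrite phiB; lra.
have K2 : N u < N (p b - p c').
  apply: lt_le_trans (phiN _); rewrite phiB; lra.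
have K3 : N u < N (p c - p c').
  apply: lt_le_trans (phiN _); rewrite phiB; lra.
case: (boolP (connect (adj (T :\ (a, b))) a c)) => Ac.
  case: (boolP (connect (adj (T :\ (a, b))) a c')) => Ac'.
    have := exchange Ht Hab Ac' (b_notA Ht Hab) Ns Hmax.
    rewrite Nab -Ns opprB; lra.
  have := exchange Ht Hab Ac Ac' Ns Hmax; rewrite Nab; lra.
have := exchange Ht Hab (connect0 _ a) Ac Ns Hmax.
rewrite Nab -Ns opprB; lra.
Qed.
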